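(* For every $n\geq 1$ there is a computable sequence $\langle f_i : i\in\omega\rangle$ of colorings $f_i:[\omega]^n\to 2$ such that for every sequence $\langle H_i : i\in\omega\rangle$ in which each $H_i$ is an infinite set homogeneous for $f_i$, we have $\emptyset^{(n)}\leq_T \langle H_i : i\in\omega\rangle$.
   Context: $[\omega]^n$ denotes the set of $n$-element subsets of $\omega$; a set $H$ is homogeneous for $f:[\omega]^n\to 2$ if $f$ is constant on $[H]^n$. $\emptyset^{(n)}$ is the $n$-th Turing jump of the empty set. *)

(* Defs.v *)
From Stdlib Require Import Arith List Sorting.Sorted.
Import ListNotations.

Definition natset := nat -> Prop.

Definition pair (a b : nat) : nat := (a + b) * (a + b + 1) / 2 + a.

(** Programs: unary oracle mu-recursive functions (with pairing). *)
Inductive code : Type :=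
| cZero
| cSucc
| cId
| cFst
| cSnd
| cOracle
| cPair (f g : code)
| cComp (f g : code)
| cPrec (f g : code)
| cMin (f : code).

Inductive eval (A : natset) : code -> nat -> nat -> Prop :=
| ev_zero x : eval A cZero x 0
| ev_succ x : eval A cSucc x (S x)
| ev_id x : eval A cId x x
| ev_fst a b : eval A cFst (pair a b) a
| ev_snd a b : eval A cSnd (pair a b) b
| ev_oracle_in x : A x -> eval A cOracle x 1
| ev_oracle_out x : ~ A x -> eval A cOracle x 0
| ev_pair f g x u v : eval A f x u -> eval A g x v -> eval A (cPair f g) x (pair u v)
| ev_comp f g x u v : eval A g x u -> eval A f u v -> eval A (cComp f g) x v
| ev_prec0 f g x v : eval A f x v -> eval A (cPrec f g) (pair 0 x) v
| ev_precS f g y x u v :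
    eval A (cPrec f g) (pair y x) u -> eval A g (pair y (pair u x)) v ->
    eval A (cPrec f g) (pair (S y) x) v
| ev_min f x y :
    eval A f (pair y x) 0 ->
    (forall z, z < y -> exists v, v <> 0 /\ eval A f (pair z x) v) ->
    eval A (cMin f) x y.

Fixpoint godel (c : code) : nat :=
  match c with
  | cZero => pair 0 0
  | cSucc => pair 1 0
  | cId => pair 2 0
  | cFst => pair 3 0
  | cSnd => pair 4 0
  | cOracle => pair 5 0
  | cPair f g => pair 6 (pair (godel f) (godel g))
  | cComp f g => pair 7 (pair (godel f) (godel g))
  | cPrec f g => pair 8 (pair (godel f) (godel g))
  | cMin f => pair 9 (godel f)
  end.

Definition bool2nat (b : bool) : nat := if b then 1 else 0.

Definition Treducible (A B : natset) : Prop :=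
  exists c : code, forall x, (A x -> eval B c x 1) /\ (~ A x -> eval B c x 0).

Definition jump (A : natset) : natset :=
  fun e => exists c, godel c = e /\ exists y, eval A c e y.

Definition empty_set : natset := fun _ => False.

Definition iterated_jump (n : nat) : natset := Nat.iter n jump empty_set.

(** Finite strictly increasing lists code elements of [omega]^n. *)
Definition is_nsubset (n : nat) (s : list nat) : Prop :=
  length s = n /\ Sorted lt s.

Fixpoint code_list (s : list nat) : nat :=
  match s with
  | [] => 0
  | x :: s' => S (pair x (code_list s'))
  end.

(** A sequence of colorings f_i : [omega]^n -> 2 (f i s is the color of
    the n-set listed increasingly by s; values off [omega]^n are irrelevant). *)
Definition coloring_seq := nat -> list nat -> bool.

Definition computable_coloring_seq (n : nat) (f : coloring_seq) : Prop :=
  exists c : code, forall i s, is_nsubset n s ->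
    eval empty_set c (pair i (code_list s)) (bool2nat (f i s)).

Definition infinite_set (H : natset) : Prop :=
  forall m, exists x, m <= x /\ H x.

Definition homogeneous (n : nat) (g : list nat -> bool) (H : natset) : Prop :=
  exists b : bool, forall s, is_nsubset n s -> Forall H s -> g s = b.

Definition seq_join (H : nat -> natset) : natset :=
  fun z => exists i x, z = pair i x /\ H i x.

(* Main.v *)
Require Import Defs.
From Stdlib Require Import Arith Lia List ClassicalEpsilon Sorting.Sorted.
Import ListNotations.
Open Scope bool_scope.

Lemma pair_S_l a b : pair (S a) b = S (pair a (S b)).
Proof. unfold pair. replace (S a + b) with (a + S b) by lia. lia. Qed.

Lemma pair_0_S a : pair 0 (S a) = S (pair a 0).
Proof. unfold pair. rewrite !Nat.add_0_r, !Nat.add_0_l.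
  replace (S a * (S a + 1)) with (a*(a+1) + (a+1)*2) by nia.
  rewrite Nat.div_add by lia. lia. Qed.

Lemma pair_0_0 : pair 0 0 = 0. Proof. reflexivity. Qed.

Fixpoint unp (z : nat) : nat * nat :=
  match z with
  | 0 => (0,0)
  | S z' => match unp z' with (a, 0) => (0, S a) | (a, S b) => (S a, b) end
  end.

Lemma pair_unp z : pair (fst (unp z)) (snd (unp z)) = z.
Proof. induction z as [|z IH]; [reflexivity|]. simpl.
  destruct (unp z) as [a [|b]]; simpl in *.
  - rewrite pair_0_S. congruence.
  - rewrite pair_S_l. congruence. Qed.

Lemma unp_pair a b : unp (pair a b) = (a, b).
Proof.
  assert (H: forall s a b, a + b <= s -> unp (pair a b) = (a,b)).
  { induction s as [|s IHs]; intros a0 b0 Hs.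
    - assert (a0 = 0) by lia; assert (b0 = 0) by lia; subst; reflexivity.
    - induction a0 as [|a0 IHa] in b0, Hs |- *.
      + destruct b0 as [|c]; [reflexivity|].
        rewrite pair_0_S. simpl. rewrite IHs by lia. reflexivity.
      + rewrite pair_S_l. simpl. rewrite IHa by lia. reflexivity. }
  apply (H (a+b)); lia.
Qed.

Definition P1 z := fst (unp z).
Definition P2 z := snd (unp z).
Lemma P1_pair a b : P1 (pair a b) = a. Proof. unfold P1; rewrite unp_pair; reflexivity. Qed.
Lemma P2_pair a b : P2 (pair a b) = b. Proof. unfold P2; rewrite unp_pair; reflexivity. Qed.
Lemma pair_P z : pair (P1 z) (P2 z) = z. Proof. apply pair_unp. Qed.
Lemma pair_inj a b c d : pair a b = pair c d -> a = c /\ b = d.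
Proof. intro H. assert (H1 := unp_pair a b). rewrite H, unp_pair in H1. inversion H1; auto. Qed.
Lemma P1_0 : P1 0 = 0. Proof. reflexivity. Qed.
Lemma P2_0 : P2 0 = 0. Proof. reflexivity. Qed.

Definition compA (A : natset) (F : nat -> nat) : Prop :=
  exists c, forall x, eval A c x (F x).

Fixpoint PR (F G : nat -> nat) (y x : nat) : nat :=
  match y with 0 => F x | S y' => G (pair y' (pair (PR F G y' x) x)) end.

Lemma compA_ext A F G : (forall x, F x = G x) -> compA A F -> compA A G.
Proof. intros H [c Hc]. exists c. intro x. rewrite <- H. auto. Qed.

Lemma c_zero A : compA A (fun _ => 0).
Proof. exists cZero. constructor. Qed.
Lemma c_succ A : compA A S.
Proof. exists cSucc. constructor. Qed.
Lemma c_id A : compA A (fun x => x).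
Proof. exists cId. constructor. Qed.
Lemma c_P1 A : compA A P1.
Proof. exists cFst. intro x. rewrite <- (pair_P x) at 1. constructor. Qed.
Lemma c_P2 A : compA A P2.
Proof. exists cSnd. intro x. rewrite <- (pair_P x) at 1. constructor. Qed.
Lemma c_pair A F G : compA A F -> compA A G -> compA A (fun x => pair (F x) (G x)).
Proof. intros [f Hf] [g Hg]. exists (cPair f g). intro x. constructor; auto. Qed.
Lemma c_comp A F G : compA A F -> compA A G -> compA A (fun x => F (G x)).
Proof. intros [f Hf] [g Hg]. exists (cComp f g). intro x. econstructor; eauto. Qed.
Lemma c_PR0 A F G : compA A F -> compA A G -> compA A (fun z => PR F G (P1 z) (P2 z)).
Proof. intros [f Hf] [g Hg]. exists (cPrec f g). intro z.
  rewrite <- (pair_P z) at 1. generalize (P1 z) (P2 z). intros y x.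
  induction y; simpl; econstructor; eauto. Qed.
Lemma c_oracle A : compA A (fun x => bool2nat (if excluded_middle_informative (A x) then true else false)).
Proof. exists cOracle. intro x. destruct (excluded_middle_informative (A x)); simpl; constructor; auto. Qed.

Lemma c_const A n : compA A (fun _ => n).
Proof. induction n. apply c_zero. apply (c_comp A S (fun _ => n)); auto using c_succ. Qed.

Lemma c_app1 A H F : compA A H -> compA A F -> compA A (fun x => H (F x)).
Proof. apply c_comp. Qed.
Lemma c_app2 A H F G : compA A (fun z => H (P1 z) (P2 z)) -> compA A F -> compA A G ->
  compA A (fun x => H (F x) (G x)).
Proof. intros h f g. eapply compA_ext; [|apply (c_comp A _ _ h (c_pair A F G f g))].
  intro x. simpl. rewrite P1_pair, P2_pair. reflexivity. Qed.
Lemma c_PR A F G Y X : compA A F -> compA A G -> compA A Y -> compA A X ->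
  compA A (fun x => PR F G (Y x) (X x)).
Proof. intros. apply (c_app2 A (PR F G)); auto. apply c_PR0; auto. Qed.

Definition ifz (n a b : nat) := match n with 0 => a | S _ => b end.

Lemma c2_pair A : compA A (fun z => pair (P1 z) (P2 z)).
Proof. eapply compA_ext; [|apply c_id]. intro; simpl; rewrite pair_P; auto. Qed.
Lemma c_pred A : compA A pred.
Proof. eapply compA_ext with (F := fun y => PR (fun _ => 0) (fun w => P1 w) y 0).
  - intros [|y]; simpl; [auto| apply P1_pair].
  - apply c_PR; auto using c_zero, c_P1, c_id, c_const. Qed.
Lemma c2_add A : compA A (fun z => P1 z + P2 z).
Proof. eapply compA_ext; [|apply (c_PR0 A (fun x => x) (fun w => S (P1 (P2 w))))].
  - intro z. simpl. generalize (P1 z) (P2 z); intros y x. induction y; simpl; auto.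
    rewrite P2_pair, P1_pair. auto.
  - apply c_id.
  - apply c_app1; [apply c_succ|]. apply c_app1; [apply c_P1|apply c_P2]. Qed.
Lemma c2_subr A : compA A (fun z => P2 z - P1 z).
Proof. eapply compA_ext; [|apply (c_PR0 A (fun x => x) (fun w => pred (P1 (P2 w))))].
  - intro z. simpl. generalize (P1 z) (P2 z); intros y x. induction y; simpl. lia.
    rewrite P2_pair, P1_pair. lia.
  - apply c_id.
  - apply c_app1; [apply c_pred|]. apply c_app1; [apply c_P1|apply c_P2]. Qed.
Lemma c2_sub A : compA A (fun z => P1 z - P2 z).
Proof. eapply compA_ext; [|apply (c_app2 A (fun a b => b - a) P2 P1)]; auto using c2_subr, c_P1, c_P2. Qed.
Lemma c2_mul A : compA A (fun z => P1 z * P2 z).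
Proof. eapply compA_ext; [|apply (c_PR0 A (fun _ => 0) (fun w => P1 (P2 w) + P2 (P2 w)))].
  - intro z. simpl. generalize (P1 z) (P2 z); intros y x. induction y; simpl; auto.
    rewrite P2_pair, P1_pair, P2_pair. lia.
  - apply c_zero.
  - apply (c_app2 A Nat.add); auto using c2_add.
    apply c_app1; [apply c_P1|apply c_P2]. apply c_app1; [apply c_P2|apply c_P2]. Qed.
Lemma c_ifz A N U V : compA A N -> compA A U -> compA A V -> compA A (fun x => ifz (N x) (U x) (V x)).
Proof. intros hn hu hv.
  assert (h: compA A (fun z => PR (fun x => P1 x) (fun w => P2 (P2 (P2 w))) (P1 z) (P2 z))).
  { apply c_PR0. apply c_P1. apply c_app1. apply c_P2. apply c_app1; apply c_P2. }
  eapply compA_ext; [| apply (c_app2 A _ N (fun x => pair (U x) (V x)) h hn (c_pair A U V hu hv))].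
  intro x. simpl. destruct (N x); simpl. apply P1_pair. rewrite !P2_pair. reflexivity. Qed.
Lemma c_leb A F G : compA A F -> compA A G -> compA A (fun x => bool2nat (F x <=? G x)).
Proof. intros hf hg.
  eapply compA_ext; [|apply (c_ifz A (fun x => F x - G x) (fun _ => 1) (fun _ => 0))].
  - intro x. simpl. destruct (F x <=? G x) eqn:E.
    + apply Nat.leb_le in E. replace (F x - G x) with 0 by lia. reflexivity.
    + apply Nat.leb_gt in E. destruct (F x - G x) eqn:E2; [lia|reflexivity].
  - apply (c_app2 A Nat.sub); auto using c2_sub.
  - apply c_const.
  - apply c_const. Qed.
Lemma c_ltb A F G : compA A F -> compA A G -> compA A (fun x => bool2nat (F x <? G x)).
Proof. intros. apply (c_leb A (fun x => S (F x)) G); auto. apply c_app1; auto using c_succ. Qed.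
Lemma c_andb A F G : compA A (fun x => bool2nat (F x)) -> compA A (fun x => bool2nat (G x)) ->
   compA A (fun x => bool2nat (F x && G x)).
Proof. intros hf hg. eapply compA_ext; [|apply (c_app2 A Nat.mul _ _ (c2_mul A) hf hg)].
  intro x. cbv beta. destruct (F x), (G x); reflexivity. Qed.
Lemma c_eqb A F G : compA A F -> compA A G -> compA A (fun x => bool2nat (F x =? G x)).
Proof. intros hf hg. eapply compA_ext; [|apply (c_andb A (fun x => F x <=? G x) (fun x => G x <=? F x))].
  - intro x. simpl. destruct (F x =? G x) eqn:E.
    + apply Nat.eqb_eq in E. rewrite E, Nat.leb_refl. reflexivity.
    + apply Nat.eqb_neq in E. destruct (F x <=? G x) eqn:E1, (G x <=? F x) eqn:E2; try reflexivity.
      apply Nat.leb_le in E1, E2. lia.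
  - apply c_leb; auto.
  - apply c_leb; auto. Qed.
Lemma c_if A (B : nat -> bool) U V : compA A (fun x => bool2nat (B x)) -> compA A U -> compA A V ->
  compA A (fun x => if B x then U x else V x).
Proof. intros hb hu hv. eapply compA_ext; [|apply (c_ifz A _ V U hb hv hu)].
  intro x. cbv beta. destruct (B x); reflexivity. Qed.
Lemma c_app3 A H F G K : compA A (fun z => H (P1 z) (P1 (P2 z)) (P2 (P2 z))) ->
  compA A F -> compA A G -> compA A K -> compA A (fun x => H (F x) (G x) (K x)).
Proof. intros h hf hg hk.
  eapply compA_ext; [|apply (c_app1 A _ (fun x => pair (F x) (pair (G x) (K x))) h)].
  - intro x. simpl. rewrite !P1_pair, !P2_pair, P1_pair. reflexivity.
  - apply c_pair; auto. apply c_pair; auto. Qed.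

Create HintDb cdb.
#[export] Hint Resolve c_succ c_P1 c_P2 c_pred c2_pair c2_add c2_sub c2_mul : cdb.

Ltac ct := cbv beta;
  first [ solve [eassumption]
  | match goal with
    | |- compA _ (fun _ => ?c) => apply c_const
    | |- compA _ (fun x => x) => apply c_id
    | |- compA _ (fun x => if @?B x then @?U x else @?V x) => apply (c_if _ B U V); ct
    | |- compA _ (fun x => bool2nat (@?F x =? @?G x)) => apply (c_eqb _ F G); ct
    | |- compA _ (fun x => bool2nat (@?F x <=? @?G x)) => apply (c_leb _ F G); ct
    | |- compA _ (fun x => bool2nat (@?F x <? @?G x)) => apply (c_ltb _ F G); ct
    | |- compA _ (fun x => bool2nat (@?F x && @?G x)) => apply (c_andb _ F G); ct
    | |- compA _ (fun x => bool2nat (?H (@?F x) (@?G x))) =>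
        apply (c_app2 _ (fun a b => bool2nat (H a b)) F G); [solve [eassumption | eauto with cdb] | ct | ct]
    | |- compA _ (fun x => ifz (@?N x) (@?U x) (@?V x)) => apply (c_ifz _ N U V); ct
    | |- compA _ (fun x => PR ?F ?G (@?Y x) (@?X x)) => apply (c_PR _ F G Y X); ct
    | |- compA _ (fun x => ?H (@?F x) (@?G x) (@?K x)) =>
        apply (c_app3 _ H F G K); [solve [eauto with cdb] | ct | ct | ct]
    | |- compA _ (fun x => ?H (@?F x) (@?G x)) =>
        apply (c_app2 _ H F G); [solve [eauto with cdb] | ct | ct]
    | |- compA _ (fun x => ?H (@?F x)) =>
        apply (c_app1 _ H F); [solve [eauto with cdb] | ct]
    end ].


Definition hdn (l : nat) := ifz l 0 (P1 (pred l)).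
Definition tln (l : nat) := ifz l 0 (P2 (pred l)).
Definition consn (h t : nat) := S (pair h t).
Lemma hd_cons h t : hdn (consn h t) = h. Proof. unfold hdn, consn; simpl. apply P1_pair. Qed.
Lemma tl_cons h t : tln (consn h t) = t. Proof. unfold tln, consn; simpl. apply P2_pair. Qed.
Lemma hd_0 : hdn 0 = 0. Proof. reflexivity. Qed.
Lemma tl_0 : tln 0 = 0. Proof. reflexivity. Qed.

Definition tlN (q l : nat) := PR (fun l => l) (fun w => tln (P1 (P2 w))) q l.
Definition nthn (q l : nat) := hdn (tlN q l).
Lemma tlN_S q l : tlN (S q) l = tlN q (tln l).
Proof. assert (E: forall q l, tlN (S q) l = tln (tlN q l)).
  { intros. unfold tlN. simpl. rewrite P2_pair, P1_pair. auto. }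
  induction q. rewrite E. reflexivity. rewrite E, IHq, <- E. auto. Qed.
Lemma tlN_0 q : tlN q 0 = 0.
Proof. induction q. reflexivity. rewrite tlN_S. exact IHq. Qed.
Lemma nth_cons0 h t : nthn 0 (consn h t) = h. Proof. apply hd_cons. Qed.
Lemma nth_consS q h t : nthn (S q) (consn h t) = nthn q t.
Proof. unfold nthn. rewrite tlN_S, tl_cons. auto. Qed.
Lemma nth_0 q : nthn q 0 = 0. Proof. unfold nthn. rewrite tlN_0. reflexivity. Qed.

Lemma c2_nth A : compA A (fun z => nthn (P1 z) (P2 z)).
Proof. unfold nthn, tlN, hdn, tln. ct. Qed.
Lemma c_hd A : compA A hdn. Proof. unfold hdn. ct. Qed.
Lemma c_tl A : compA A tln. Proof. unfold tln. ct. Qed.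
Lemma c2_cons A : compA A (fun z => consn (P1 z) (P2 z)). Proof. unfold consn. ct. Qed.
#[export] Hint Resolve c2_nth c_hd c_tl c2_cons : cdb.

Fixpoint MLr (F : nat -> nat) (n j : nat) : nat :=
  match j with 0 => 0 | S j' => consn (F (n - S j')) (MLr F n j') end.
Definition ML F n := MLr F n n.

Lemma nth_MLr F n j q : j <= n -> nthn q (MLr F n j) = if q <? j then F (n - j + q) else 0.
Proof. induction j in q |- *; intro Hj; simpl.
  - apply nth_0.
  - destruct q. + rewrite nth_cons0. simpl. f_equal; lia.
    + rewrite nth_consS, IHj by lia. change (S q <? S j) with (q <? j).
      destruct (q <? j); auto. f_equal; lia. Qed.
Lemma nth_ML F n q : nthn q (ML F n) = if q <? n then F q else 0.
Proof. unfold ML. rewrite nth_MLr by lia. destruct (q <? n); auto. f_equal; lia. Qed.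
Lemma MLr_ext F G n j : (forall y, y < n -> F y = G y) -> j <= n -> MLr F n j = MLr G n j.
Proof. intros H Hj. induction j; simpl; auto. rewrite H by lia. rewrite IHj by lia. auto. Qed.
Lemma ML_ext F G n : (forall y, y < n -> F y = G y) -> ML F n = ML G n.
Proof. intros. apply MLr_ext; auto. Qed.

Lemma c_ML A (Fh : nat -> nat -> nat) N : compA A (fun w => Fh (P1 w) (P2 w)) -> compA A N ->
  compA A (fun x => ML (fun z => Fh z x) (N x)).
Proof. intros hf hn.
  eapply compA_ext with (F := fun x => PR (fun _ => 0)
     (fun w => consn (Fh (P1 (P2 (P2 w)) - S (P1 w)) (P2 (P2 (P2 w)))) (P1 (P2 w))) (N x) (pair (N x) x)).
  - intro x. unfold ML. generalize (N x). intro n.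
    assert (forall j, PR (fun _ => 0)
     (fun w => consn (Fh (P1 (P2 (P2 w)) - S (P1 w)) (P2 (P2 (P2 w)))) (P1 (P2 w))) j (pair n x) = MLr (fun z => Fh z x) n j) as E; [|apply E].
    induction j; simpl; auto. rewrite !P2_pair, !P1_pair. rewrite IHj. auto.
  - ct. Qed.

Fixpoint bmin (P : nat -> bool) (b : nat) : nat :=
  match b with 0 => 0 | S b' => let m := bmin P b' in
     if m <? b' then m else if P b' then b' else S b' end.
Lemma bmin_spec P b : bmin P b <= b /\ (bmin P b < b -> P (bmin P b) = true) /\
   (forall z, z < bmin P b -> P z = false).
Proof. induction b as [|b IH]; simpl. split; [lia| split; intros; lia].
  destruct IH as [H1 [H2 H3]].
  destruct (bmin P b <? b) eqn:E.
  - apply Nat.ltb_lt in E. split; [lia|split; auto].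
  - apply Nat.ltb_ge in E. assert (bmin P b = b) by lia.
    destruct (P b) eqn:E2. + split; [lia|split; auto]. intros z Hz. apply H3. lia.
    + split; [lia|split]. intros; lia. intros z Hz. destruct (Nat.eq_dec z b). subst; auto. apply H3; lia. Qed.

Lemma c_bmin A (Pb : nat -> nat -> bool) B : compA A (fun w => bool2nat (Pb (P1 w) (P2 w))) -> compA A B ->
  compA A (fun x => bmin (fun y => Pb y x) (B x)).
Proof. intros hp hb.
  eapply compA_ext with (F := fun x => PR (fun _ => 0)
     (fun w => if P1 (P2 w) <? P1 w then P1 (P2 w) else if Pb (P1 w) (P2 (P2 w)) then P1 w else S (P1 w)) (B x) x).
  - intro x. generalize (B x). intro j. induction j; simpl; auto.
    rewrite !P2_pair, !P1_pair. rewrite IHj. auto.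
  - ct. Qed.

Ltac ct2 := cbv beta;
  first [ solve [eassumption]
  | match goal with
    | |- compA _ (fun x => bmin (fun y => @?P y x) (@?B x)) => apply (c_bmin _ P B); ct2
    | |- compA _ (fun x => ML (fun y => @?P y x) (@?B x)) => apply (c_ML _ P B); ct2
    | |- compA _ (fun _ => ?c) => apply c_const
    | |- compA _ (fun x => x) => apply c_id
    | |- compA _ (fun x => if @?B x then @?U x else @?V x) => apply (c_if _ B U V); ct2
    | |- compA _ (fun x => bool2nat (@?F x =? @?G x)) => apply (c_eqb _ F G); ct2
    | |- compA _ (fun x => bool2nat (@?F x <=? @?G x)) => apply (c_leb _ F G); ct2
    | |- compA _ (fun x => bool2nat (@?F x <? @?G x)) => apply (c_ltb _ F G); ct2
    | |- compA _ (fun x => bool2nat (@?F x && @?G x)) => apply (c_andb _ F G); ct2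
    | |- compA _ (fun x => bool2nat (?H (@?F x) (@?G x))) =>
        apply (c_app2 _ (fun a b => bool2nat (H a b)) F G); [solve [eassumption | eauto with cdb] | ct2 | ct2]
    | |- compA _ (fun x => ifz (@?N x) (@?U x) (@?V x)) => apply (c_ifz _ N U V); ct2
    | |- compA _ (fun x => PR ?F ?G (@?Y x) (@?X x)) => apply (c_PR _ F G Y X); ct2
    | |- compA _ (fun x => ?H (@?F x) (@?G x) (@?K x)) =>
        apply (c_app3 _ H F G K); [solve [eauto with cdb] | ct2 | ct2 | ct2]
    | |- compA _ (fun x => ?H (@?F x) (@?G x)) =>
        apply (c_app2 _ H F G); [solve [eauto with cdb] | ct2 | ct2]
    | |- compA _ (fun x => ?H (@?F x)) =>
        apply (c_app1 _ H F); [solve [eauto with cdb] | ct2]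
    end ].

Definition O (s σ q : nat) := if q <? s then S (nthn q σ) else 0.
Definition Vl L z := P1 (nthn z L).
Definition Rl L z := P2 (nthn z L).

Definition vstep (L z : nat) : nat :=
  let tg := P1 z in let a := P2 z in
  if tg <=? 5 then bool2nat (a =? 0)
  else if tg <=? 8 then bool2nat ((Vl L (P1 a) =? 1) && (Vl L (P2 a) =? 1))
  else if tg =? 9 then bool2nat (Vl L a =? 1) else 0.

Definition rstep (o : nat -> nat) (b L z : nat) : nat :=
  let e := P1 z in let x := P2 z in let tg := P1 e in let a := P2 e in
  if tg =? 0 then (if a =? 0 then 1 else 0)
  else if tg =? 1 then (if a =? 0 then S (S x) else 0)
  else if tg =? 2 then (if a =? 0 then S x else 0)
  else if tg =? 3 then (if a =? 0 then S (P1 x) else 0)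
  else if tg =? 4 then (if a =? 0 then S (P2 x) else 0)
  else if tg =? 5 then (if a =? 0 then (if o x <=? 2 then o x else 0) else 0)
  else if tg =? 6 then
     (if Rl L (pair (P1 a) x) =? 0 then 0 else if Rl L (pair (P2 a) x) =? 0 then 0
      else S (pair (pred (Rl L (pair (P1 a) x))) (pred (Rl L (pair (P2 a) x)))))
  else if tg =? 7 then
     (if Rl L (pair (P2 a) x) =? 0 then 0 else Rl L (pair (P1 a) (pred (Rl L (pair (P2 a) x)))))
  else if tg =? 8 then
     (if P1 x =? 0 then (if Vl L (P2 a) =? 1 then Rl L (pair (P1 a) (P2 x)) else 0)
      else (if Rl L (pair e (pair (pred (P1 x)) (P2 x))) =? 0 then 0
            else Rl L (pair (P2 a) (pair (pred (P1 x)) (pair (pred (Rl L (pair e (pair (pred (P1 x)) (P2 x))))) (P2 x))))))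
  else if tg =? 9 then
     (if bmin (fun y => Rl L (pair a (pair y x)) <=? 1) b <? b
      then (if Rl L (pair a (pair (bmin (fun y => Rl L (pair a (pair y x)) <=? 1) b) x)) =? 1
            then S (bmin (fun y => Rl L (pair a (pair y x)) <=? 1) b) else 0)
      else 0)
  else 0.

Definition stepfun o b L z := pair (vstep L z) (rstep o b L z).

Fixpoint tabL (o : nat -> nat) (b k : nat) : nat :=
  match k with 0 => 0 | S k' => ML (fun z => stepfun o b (tabL o b k') z) b end.

Lemma c_tabL A S_ Σ B K : compA A S_ -> compA A Σ -> compA A B -> compA A K ->
  compA A (fun x => tabL (O (S_ x) (Σ x)) (B x) (K x)).
Proof. intros hs hσ hb hk.
  eapply compA_ext with (F := fun x => PR (fun _ => 0)
     (fun w => ML (fun z => stepfun (O (P1 (P2 (P2 w))) (P1 (P2 (P2 (P2 w))))) (P2 (P2 (P2 (P2 w))))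
           (P1 (P2 w)) z) (P2 (P2 (P2 (P2 w))))) (K x) (pair (S_ x) (pair (Σ x) (B x)))).
  - intro x. generalize (K x). intro k. induction k; simpl; auto.
    repeat (rewrite ?P2_pair, ?P1_pair). rewrite IHk. reflexivity.
  - apply c_PR; [ct2| |ct2|ct2].
    unfold stepfun, vstep, rstep, O, Vl, Rl. cbv zeta. ct2.
Qed.

Definition osound (A : natset) (o : nat -> nat) := forall q, (o q = 2 -> A q) /\ (o q = 1 -> ~ A q).

Lemma entry_S o b k z : z < b -> nthn z (tabL o b (S k)) = stepfun o b (tabL o b k) z.
Proof. intro H. simpl. rewrite nth_ML. apply Nat.ltb_lt in H. rewrite H. auto. Qed.
Lemma entry_big o b k z : b <= z -> nthn z (tabL o b k) = 0.
Proof. intro H. destruct k; simpl. apply nth_0. rewrite nth_ML. apply Nat.ltb_ge in H. rewrite H. auto. Qed.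

Lemma godel_inj c1 c2 : godel c1 = godel c2 -> c1 = c2.
Proof. revert c2. induction c1; intros c2 H; destruct c2; simpl in H;
  apply pair_inj in H; destruct H as [H1 H2]; try discriminate; auto;
  try (apply pair_inj in H2; destruct H2 as [H3 H4]); f_equal; auto. Qed.

Lemma b2n1 b : bool2nat b = 1 -> b = true. Proof. destruct b; simpl; auto; discriminate. Qed.

Lemma eval_fst A x : eval A cFst x (P1 x).
Proof. rewrite <- (pair_P x) at 1. constructor. Qed.
Lemma eval_snd A x : eval A cSnd x (P2 x).
Proof. rewrite <- (pair_P x) at 1. constructor. Qed.

Ltac simp := repeat (rewrite ?P1_pair, ?P2_pair in *).

Lemma sound A o b : osound A o -> forall k z,
  (Vl (tabL o b k) z = 1 -> exists c, godel c = z) /\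
  (forall y, Rl (tabL o b k) z = S y -> exists c, godel c = P1 z /\ eval A c (P2 z) y).
Proof.
  intros Ho k. induction k as [|k IH]; intro z.
  - unfold Vl, Rl. simpl. rewrite nth_0. split; intros; discriminate.
  - assert (IHV := fun z => proj1 (IH z)). assert (IHR := fun z => proj2 (IH z)). clear IH.
    destruct (Nat.lt_ge_cases z b) as [Hz|Hz];
      [|unfold Vl, Rl; rewrite entry_big by auto; split; intros; discriminate].
    unfold Vl at 1, Rl at 1. rewrite entry_S by auto. unfold stepfun. simp.
    set (L := tabL o b k) in *.
    split.
    + intro H. unfold vstep in H. cbv zeta in H.
      pose proof (pair_P z) as Ez. set (t := P1 z) in *. set (a := P2 z) in *.
      clearbody t a. subst z.
      destruct t as [|[|[|[|[|[|[|[|[|[|t]]]]]]]]]]; simpl in H; try discriminate;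
      try (apply b2n1, Nat.eqb_eq in H; subst a;
           first [exists cZero; reflexivity | exists cSucc; reflexivity | exists cId; reflexivity | exists cFst; reflexivity | exists cSnd; reflexivity | exists cOracle; reflexivity]).
      * apply b2n1, andb_prop in H. destruct H as [H1 H2]. apply Nat.eqb_eq in H1, H2.
        destruct (IHV _ H1) as [c1 E1]. destruct (IHV _ H2) as [c2 E2].
        exists (cPair c1 c2). simpl. rewrite E1, E2, pair_P. auto.
      * apply b2n1, andb_prop in H. destruct H as [H1 H2]. apply Nat.eqb_eq in H1, H2.
        destruct (IHV _ H1) as [c1 E1]. destruct (IHV _ H2) as [c2 E2].
        exists (cComp c1 c2). simpl. rewrite E1, E2, pair_P. auto.
      * apply b2n1, andb_prop in H. destruct H as [H1 H2]. apply Nat.eqb_eq in H1, H2.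
        destruct (IHV _ H1) as [c1 E1]. destruct (IHV _ H2) as [c2 E2].
        exists (cPrec c1 c2). simpl. rewrite E1, E2, pair_P. auto.
      * apply b2n1, Nat.eqb_eq in H. destruct (IHV _ H) as [c1 E1].
        exists (cMin c1). simpl. rewrite E1. auto.
    + intros y H. unfold rstep in H. cbv zeta in H.
      pose proof (pair_P z) as Ez. set (e := P1 z) in *. set (x := P2 z) in *.
      clearbody e x. subst z. simp.
      pose proof (pair_P e) as Ee. set (t := P1 e) in *. set (a := P2 e) in *.
      clearbody t a. subst e.
      destruct t as [|[|[|[|[|[|[|[|[|[|t]]]]]]]]]]; simpl in H; try discriminate.
      * destruct (a =? 0) eqn:Ea; try discriminate. apply Nat.eqb_eq in Ea; subst.
        injection H; intro; subst. exists cZero; split; [reflexivity|constructor].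
      * destruct (a =? 0) eqn:Ea; try discriminate. apply Nat.eqb_eq in Ea; subst.
        injection H; intro; subst. exists cSucc; split; [reflexivity|constructor].
      * destruct (a =? 0) eqn:Ea; try discriminate. apply Nat.eqb_eq in Ea; subst.
        injection H; intro; subst. exists cId; split; [reflexivity|constructor].
      * destruct (a =? 0) eqn:Ea; try discriminate. apply Nat.eqb_eq in Ea; subst.
        injection H; intro; subst. exists cFst; split; [reflexivity|apply eval_fst].
      * destruct (a =? 0) eqn:Ea; try discriminate. apply Nat.eqb_eq in Ea; subst.
        injection H; intro; subst. exists cSnd; split; [reflexivity|apply eval_snd].
      * destruct (a =? 0) eqn:Ea; try discriminate. apply Nat.eqb_eq in Ea; subst.
        exists cOracle; split; [reflexivity|].
        destruct (o x <=? 2) eqn:E2; try discriminate. apply Nat.leb_le in E2.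
        destruct (Ho x) as [Hi Ho'].
        destruct y as [|[|y]]; [| |lia].
        -- apply ev_oracle_out. apply Ho'. auto.
        -- apply ev_oracle_in. apply Hi. auto.
      * destruct (Rl L (pair (P1 a) x)) as [|u1] eqn:E1; simpl in H; try discriminate.
        destruct (Rl L (pair (P2 a) x)) as [|u2] eqn:E2; simpl in H; try discriminate.
        injection H; intro; subst.
        destruct (IHR _ _ E1) as [c1 [G1 V1]]. destruct (IHR _ _ E2) as [c2 [G2 V2]]. simp.
        exists (cPair c1 c2). simpl. rewrite G1, G2, pair_P. split; auto. constructor; auto.
      * destruct (Rl L (pair (P2 a) x)) as [|u] eqn:E1; simpl in H; try discriminate.
        destruct (IHR _ _ E1) as [c2 [G2 V2]]. destruct (IHR _ _ H) as [c1 [G1 V1]]. simp.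
        exists (cComp c1 c2). simpl. rewrite G1, G2, pair_P. split; auto. econstructor; eauto.
      * pose proof (pair_P x) as Ex. set (yv := P1 x) in *. set (x' := P2 x) in *.
        clearbody yv x'. subst x. simp.
        destruct yv as [|y'].
        -- simpl in H. destruct (Vl L (P2 a) =? 1) eqn:E1; try discriminate.
           apply Nat.eqb_eq in E1. destruct (IHV _ E1) as [c2 G2].
           destruct (IHR _ _ H) as [c1 [G1 V1]]. simp.
           exists (cPrec c1 c2). simpl. rewrite G1, G2, pair_P. split; auto. constructor; auto.
        -- simpl in H.
           destruct (Rl L (pair (pair 8 a) (pair y' x'))) as [|u] eqn:E1; simpl in H; try discriminate.
           destruct (IHR _ _ E1) as [c' [G' V']]. destruct (IHR _ _ H) as [c2 [G2 V2]]. simp.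
           destruct c'; simpl in G'; apply pair_inj in G'; destruct G' as [G' G'']; try discriminate.
           exists (cPrec c'1 c'2). split; [simpl; rewrite G''; auto|].
           rewrite <- G'' in G2. simp. apply godel_inj in G2. subst.
           econstructor; eauto.
      * set (P := fun y0 => Rl L (pair a (pair y0 x)) <=? 1) in *.
        destruct (bmin_spec P b) as [B1 [B2 B3]].
        destruct (bmin P b <? b) eqn:E1; try discriminate. apply Nat.ltb_lt in E1.
        destruct (Rl L (pair a (pair (bmin P b) x)) =? 1) eqn:E2; try discriminate.
        injection H; intro; subst y. apply Nat.eqb_eq in E2.
        destruct (IHR _ _ E2) as [c1 [G1 V1]]. simp.
        exists (cMin c1). simpl. rewrite G1. split; auto.
        constructor; auto. intros z' Hz'. specialize (B3 _ Hz'). unfold P in B3.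
        apply Nat.leb_gt in B3. destruct (Rl L (pair a (pair z' x))) as [|[|v]] eqn:E3; try lia.
        destruct (IHR _ _ E3) as [c2 [G2 V2]]. simp. rewrite <- G1 in G2. apply godel_inj in G2. subst.
        exists (S v). split; auto.
Qed.

Definition ogood (A : natset) (o : nat -> nat) N :=
  forall q, q < N -> (A q -> o q = 2) /\ (~ A q -> o q = 1).
Lemma ogood_mono A o N N' : ogood A o N -> N' <= N -> ogood A o N'.
Proof. intros H Hle q Hq. apply H. lia. Qed.

Lemma Rl_S o b k z : z < b -> Rl (tabL o b (S k)) z = rstep o b (tabL o b k) z.
Proof. intro. unfold Rl. rewrite entry_S by auto. unfold stepfun. simp. auto. Qed.
Lemma Vl_S o b k z : z < b -> Vl (tabL o b (S k)) z = vstep (tabL o b k) z.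
Proof. intro. unfold Vl. rewrite entry_S by auto. unfold stepfun. simp. auto. Qed.

Lemma complV c : exists N, forall o b k, N <= b -> N <= k -> Vl (tabL o b k) (godel c) = 1.
Proof.
  induction c;
  try (match goal with |- exists N, forall o b k, _ -> _ -> Vl _ (godel ?c) = 1 => exists (S (godel c)) end; intros o b k Hb Hk; destruct k as [|k]; [lia|];
       rewrite Vl_S by lia; unfold vstep; simpl godel; simp; reflexivity).
  - destruct IHc1 as [N1 H1]. destruct IHc2 as [N2 H2].
    exists (S (N1 + N2 + godel (cPair c1 c2))). intros o b k Hb Hk. destruct k as [|k]; [lia|].
    rewrite Vl_S by lia. unfold vstep. simpl godel. simp. simpl.
    rewrite H1, H2 by lia. reflexivity.
  - destruct IHc1 as [N1 H1]. destruct IHc2 as [N2 H2].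
    exists (S (N1 + N2 + godel (cComp c1 c2))). intros o b k Hb Hk. destruct k as [|k]; [lia|].
    rewrite Vl_S by lia. unfold vstep. simpl godel. simp. simpl.
    rewrite H1, H2 by lia. reflexivity.
  - destruct IHc1 as [N1 H1]. destruct IHc2 as [N2 H2].
    exists (S (N1 + N2 + godel (cPrec c1 c2))). intros o b k Hb Hk. destruct k as [|k]; [lia|].
    rewrite Vl_S by lia. unfold vstep. simpl godel. simp. simpl.
    rewrite H1, H2 by lia. reflexivity.
  - destruct IHc as [N1 H1].
    exists (S (N1 + godel (cMin c))). intros o b k Hb Hk. destruct k as [|k]; [lia|].
    rewrite Vl_S by lia. unfold vstep. simpl godel. simp. simpl.
    rewrite H1 by lia. reflexivity.
Qed.

Definition CmpR A c x y := exists N, forall o b k, N <= b -> N <= k -> ogood A o N ->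
  Rl (tabL o b k) (pair (godel c) x) = S y.

Lemma finmax A f x y : (forall z, z < y -> exists v, v <> 0 /\ CmpR A f (pair z x) v) ->
  exists N, forall z, z < y -> exists v, v <> 0 /\ forall o b k, N <= b -> N <= k -> ogood A o N ->
  Rl (tabL o b k) (pair (godel f) (pair z x)) = S v.
Proof. induction y as [|y IH]; intro H.
  - exists 0. intros; lia.
  - destruct IH as [N HN]. { intros; apply H; lia. }
    destruct (H y) as [v [hv [N' HN']]]; [lia|].
    exists (N + N'). intros z Hz. destruct (Nat.eq_dec z y).
    + subst. exists v. split; auto. intros. apply HN'; try lia. eapply ogood_mono; eauto; lia.
    + destruct (HN z) as [v' [hv' Hv']]; [lia|]. exists v'. split; auto. intros.
      apply Hv'; try lia. eapply ogood_mono; eauto; lia.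
Qed.

Lemma complR A : forall c x y, eval A c x y -> CmpR A c x y.
Proof.
  fix IH 4. intros c x y d. destruct d.
  - exists (S (pair (godel cZero) x)). intros o b k Hb Hk Ho. destruct k as [|k]; [lia|].
    rewrite Rl_S by lia. unfold rstep. cbv zeta. simpl godel. simp. reflexivity.
  - exists (S (pair (godel cSucc) x)). intros o b k Hb Hk Ho. destruct k as [|k]; [lia|].
    rewrite Rl_S by lia. unfold rstep. cbv zeta. simpl godel. simp. reflexivity.
  - exists (S (pair (godel cId) x)). intros o b k Hb Hk Ho. destruct k as [|k]; [lia|].
    rewrite Rl_S by lia. unfold rstep. cbv zeta. simpl godel. simp. reflexivity.
  - exists (S (pair (godel cFst) (pair a b))). intros o b0 k Hb Hk Ho. destruct k as [|k]; [lia|].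
    rewrite Rl_S by lia. unfold rstep. cbv zeta. simpl godel. simp. reflexivity.
  - exists (S (pair (godel cSnd) (pair a b))). intros o b0 k Hb Hk Ho. destruct k as [|k]; [lia|].
    rewrite Rl_S by lia. unfold rstep. cbv zeta. simpl godel. simp. reflexivity.
  - exists (S (pair (godel cOracle) x + x)). intros o b k Hb Hk Ho. destruct k as [|k]; [lia|].
    rewrite Rl_S by lia. unfold rstep. cbv zeta. simpl godel. simp. simpl.
    rewrite (proj1 (Ho x ltac:(lia))) by assumption. reflexivity.
  - exists (S (pair (godel cOracle) x + x)). intros o b k Hb Hk Ho. destruct k as [|k]; [lia|].
    rewrite Rl_S by lia. unfold rstep. cbv zeta. simpl godel. simp. simpl.
    rewrite (proj2 (Ho x ltac:(lia))) by assumption. reflexivity.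
  - destruct (IH _ _ _ d1) as [N1 H1]. destruct (IH _ _ _ d2) as [N2 H2].
    exists (S (N1 + N2 + pair (godel (cPair f g)) x)). intros o b k Hb Hk Ho. destruct k as [|k]; [lia|].
    rewrite Rl_S by lia. unfold rstep. cbv zeta. simpl godel. simp. simpl.
    rewrite H1, H2 by (try lia; eapply ogood_mono; eauto; lia). simpl. reflexivity.
  - destruct (IH _ _ _ d1) as [N1 H1]. destruct (IH _ _ _ d2) as [N2 H2].
    exists (S (N1 + N2 + pair (godel (cComp f g)) x)). intros o b k Hb Hk Ho. destruct k as [|k]; [lia|].
    rewrite Rl_S by lia. unfold rstep. cbv zeta. simpl godel. simp. simpl.
    rewrite H1 by (try lia; eapply ogood_mono; eauto; lia). simpl.
    rewrite H2 by (try lia; eapply ogood_mono; eauto; lia). reflexivity.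
  - destruct (IH _ _ _ d) as [N1 H1]. destruct (complV g) as [N2 H2].
    exists (S (N1 + N2 + pair (godel (cPrec f g)) (pair 0 x))). intros o b k Hb Hk Ho. destruct k as [|k]; [lia|].
    rewrite Rl_S by lia. unfold rstep. cbv zeta. simpl godel. simp. simpl.
    rewrite H2 by lia. simpl.
    rewrite H1 by (try lia; eapply ogood_mono; eauto; lia). reflexivity.
  - destruct (IH _ _ _ d1) as [N1 H1]. destruct (IH _ _ _ d2) as [N2 H2]. simpl godel in H1.
    exists (S (N1 + N2 + pair (godel (cPrec f g)) (pair (S y) x))). intros o b k Hb Hk Ho. destruct k as [|k]; [lia|].
    rewrite Rl_S by lia. unfold rstep. cbv zeta. simpl godel. simp. simpl.
    rewrite H1 by (try lia; eapply ogood_mono; eauto; lia). simpl.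
    rewrite H2 by (try lia; eapply ogood_mono; eauto; lia). reflexivity.
  - match goal with Hh : forall z, z < y -> _ |- _ => rename Hh into e end. assert (IHz : forall z, z < y -> exists v, v <> 0 /\ CmpR A f (pair z x) v).
    { intros z hz. destruct (e z hz) as [v [hv ev]]. exists v. split; [exact hv|]. apply (IH _ _ _ ev). }
    destruct (finmax A f x y IHz) as [N2 H2].
    destruct (IH _ _ _ d) as [N1 H1].
    exists (S (N1 + N2 + y + pair (godel (cMin f)) x)). intros o b k Hb Hk Ho. destruct k as [|k]; [lia|].
    rewrite Rl_S by lia. unfold rstep. cbv zeta. simpl godel. simp. simpl.
    set (P := fun y0 => Rl (tabL o b k) (pair (godel f) (pair y0 x)) <=? 1).
    assert (Py : P y = true). { unfold P. rewrite H1 by (try lia; eapply ogood_mono; eauto; lia). reflexivity. }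
    assert (Pz : forall z, z < y -> P z = false).
    { intros z hz. destruct (H2 z hz) as [v [hv Hv]]. unfold P.
      rewrite Hv by (try lia; eapply ogood_mono; eauto; lia). apply Nat.leb_gt. lia. }
    destruct (bmin_spec P b) as [B1 [B2 B3]].
    assert (bmin P b = y).
    { destruct (Nat.lt_total (bmin P b) y) as [Hl|[He|Hl]]; auto.
      - rewrite Pz in B2; auto. specialize (B2 ltac:(lia)). discriminate.
      - rewrite B3 in Py; auto. discriminate. }
    fold P. rewrite H. replace (y <? b) with true by (symmetry; apply Nat.ltb_lt; lia).
    rewrite H1 by (try lia; eapply ogood_mono; eauto; lia). reflexivity.
Qed.

Definition chi (A : natset) (q : nat) : nat := if excluded_middle_informative (A q) then 1 else 0.
Definition T (σ s e : nat) := if Rl (tabL (O s σ) s s) (pair e e) =? 0 then 0 else 1.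

Lemma O_chi A s q : O s (ML (chi A) s) q = if q <? s then S (chi A q) else 0.
Proof. unfold O. destruct (q <? s) eqn:E; auto. rewrite nth_ML, E. auto. Qed.

Lemma jump_limit A e : exists N, forall s, N <= s -> T (ML (chi A) s) s e = chi (jump A) e.
Proof.
  unfold chi at 2. destruct (excluded_middle_informative (jump A e)) as [Hj|Hj].
  - destruct Hj as [c [Gc [y Ev]]]. destruct (complR A c e y Ev) as [N HN].
    exists N. intros s Hs. unfold T. rewrite Gc in HN. rewrite HN; auto.
    intros q Hq. rewrite O_chi. replace (q <? s) with true by (symmetry; apply Nat.ltb_lt; lia).
    unfold chi. destruct (excluded_middle_informative (A q)); split; intro; tauto.
  - exists 0. intros s _. unfold T.
    destruct (Rl (tabL (O s (ML (chi A) s)) s s) (pair e e)) as [|y] eqn:E; auto.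
    exfalso. apply Hj. assert (Hs : osound A (O s (ML (chi A) s))).
    + intro q. rewrite O_chi. destruct (q <? s); [|split; intro; discriminate].
      unfold chi. destruct (excluded_middle_informative (A q)); split; intro H; try injection H; auto; discriminate.
    + destruct (proj2 (sound A (O s (ML (chi A) s)) s Hs s (pair e e)) y E) as [c [G1 V1]].
      simp. exists c. split; eauto.
Qed.

Fixpoint g (k e l : nat) : nat :=
  match k with 0 => 0 | S k' => T (ML (fun y => g k' y (tln l)) (hdn l)) (hdn l) e end.

Fixpoint Lim (k : nat) (h : list nat -> nat) (v : nat) : Prop :=
  match k with
  | 0 => h [] = v
  | S k' => exists w : nat -> nat, (forall s, Lim k' (fun l => h (s :: l)) (w s)) /\
             exists N, forall s, N <= s -> w s = v
  end.

Lemma Lim_ext k h h' v : (forall l, h l = h' l) -> Lim k h v -> Lim k h' v.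
Proof. revert h h' v. induction k; simpl; intros h h' v E H.
  - rewrite <- E; auto.
  - destruct H as [w [H1 H2]]. exists w. split; auto. intro s. eapply IHk; [|apply H1]. intro; apply E. Qed.

Lemma finN (W : nat -> nat -> nat) v : (forall y, exists N, forall s', N <= s' -> W y s' = v y) ->
  forall s, exists N, forall s', N <= s' -> forall y, y < s -> W y s' = v y.
Proof. intros H s. induction s as [|s IH]. exists 0; intros; lia.
  destruct IH as [N1 H1]. destruct (H s) as [N2 H2]. exists (N1 + N2). intros s' Hs y Hy.
  destruct (Nat.eq_dec y s). subst; apply H2; lia. apply H1; lia. Qed.

Lemma Lim_family k : forall (h : nat -> list nat -> nat) v, (forall y, Lim k (h y) (v y)) ->
  forall Φ s, Lim k (fun l => Φ (ML (fun y => h y l) s)) (Φ (ML v s)).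
Proof. induction k; simpl; intros h v H Φ s.
  - f_equal. apply ML_ext. intros; auto.
  - set (W := fun y => proj1_sig (constructive_indefinite_description _ (H y))).
    assert (HW : forall y, (forall s', Lim k (fun l => h y (s' :: l)) (W y s')) /\
                           exists N, forall s', N <= s' -> W y s' = v y).
    { intro y. unfold W. destruct (constructive_indefinite_description _ (H y)) as [w Hw]. exact Hw. }
    exists (fun s' => Φ (ML (fun y => W y s') s)). split.
    + intro s'. apply (IHk (fun y l => h y (s' :: l)) (fun y => W y s')). intro y. apply HW.
    + destruct (finN W v (fun y => proj2 (HW y)) s) as [N HN]. exists N. intros s' Hs'.
      f_equal. apply ML_ext. intros. apply HN; auto.
Qed.

Lemma hdn_code x l : hdn (code_list (x :: l)) = x. Proof. apply hd_cons. Qed.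
Lemma tln_code x l : tln (code_list (x :: l)) = code_list l. Proof. apply tl_cons. Qed.

Lemma g_Lim k : forall e, Lim k (fun l => g k e (code_list l)) (chi (iterated_jump k) e).
Proof. induction k; intro e.
  - simpl. unfold chi. destruct (excluded_middle_informative (empty_set e)) as [Hf|]; [destruct Hf|reflexivity].
  - simpl Lim. exists (fun s => T (ML (chi (iterated_jump k)) s) s e). split.
    + intro s. eapply Lim_ext; [|apply (Lim_family k (fun y l => g k y (code_list l)) (chi (iterated_jump k)) IHk
         (fun σ => T σ s e) s)].
      intro l. simpl. simp. reflexivity.
    + apply jump_limit.
Qed.

Lemma homog_Lim k : forall h v, Lim k h v -> forall (H : natset) c, infinite_set H ->
  (forall l, is_nsubset k l -> Forall H l -> h l = c) -> v = c.
Proof. induction k; simpl; intros h v HL H c Hinf Hh.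
  - rewrite <- HL. apply Hh; [split; auto|auto].
  - destruct HL as [w [H1 [N HN]]]. destruct (Hinf N) as [s [Hs Hs']].
    rewrite <- (HN s Hs). apply (IHk _ _ (H1 s) (fun x => H x /\ s < x)).
    + intro m. destruct (Hinf (S (m + s))) as [x [Hx Hx']]. exists x. split; [lia|split; auto; lia].
    + intros l [Hl1 Hl2] Hl3. apply Hh.
      * split; simpl; auto. constructor; auto. destruct l; constructor. inversion Hl3; subst. tauto.
      * constructor; auto. eapply Forall_impl; [|exact Hl3]. intros a [Ha _]; auto.
Qed.

Ltac ct3 := cbv beta;
  first [ solve [eassumption]
  | match goal with
    | |- compA _ (fun x => tabL (O (@?S x) (@?Σ x)) (@?B x) (@?K x)) => apply (c_tabL _ S Σ B K); ct3
    | |- compA _ (fun x => bmin (fun y => @?P y x) (@?B x)) => apply (c_bmin _ P B); ct3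
    | |- compA _ (fun x => ML (fun y => @?P y x) (@?B x)) => apply (c_ML _ P B); ct3
    | |- compA _ (fun _ => ?c) => apply c_const
    | |- compA _ (fun x => x) => apply c_id
    | |- compA _ (fun x => if @?B x then @?U x else @?V x) => apply (c_if _ B U V); ct3
    | |- compA _ (fun x => bool2nat (@?F x =? @?G x)) => apply (c_eqb _ F G); ct3
    | |- compA _ (fun x => bool2nat (@?F x <=? @?G x)) => apply (c_leb _ F G); ct3
    | |- compA _ (fun x => bool2nat (@?F x <? @?G x)) => apply (c_ltb _ F G); ct3
    | |- compA _ (fun x => bool2nat (@?F x && @?G x)) => apply (c_andb _ F G); ct3
    | |- compA _ (fun x => ifz (@?N x) (@?U x) (@?V x)) => apply (c_ifz _ N U V); ct3
    | |- compA _ (fun x => PR ?F ?G (@?Y x) (@?X x)) => apply (c_PR _ F G Y X); ct3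
    | |- compA _ (fun x => ?H (@?F x) (@?G x) (@?K x)) =>
        apply (c_app3 _ H F G K); [solve [eauto with cdb] | ct3 | ct3 | ct3]
    | |- compA _ (fun x => ?H (@?F x) (@?G x)) =>
        apply (c_app2 _ H F G); [solve [eauto with cdb] | ct3 | ct3]
    | |- compA _ (fun x => ?H (@?F x)) =>
        apply (c_app1 _ H F); [solve [eauto with cdb] | ct3]
    end ].

Lemma c_g A k : compA A (fun w => g k (P1 w) (P2 w)).
Proof. induction k.
  - exact (c_const A 0).
  - eapply compA_ext with (F := fun w => T (ML (fun y => g k y (tln (P2 w))) (hdn (P2 w))) (hdn (P2 w)) (P1 w)).
    + intro; reflexivity.
    + unfold T, Rl. ct3.
Qed.

Lemma g_01 k e l : g k e l = 0 \/ g k e l = 1.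
Proof. destruct k; simpl; auto. unfold T. destruct (_ =? 0); auto. Qed.

Lemma c_min A F : compA A F -> (forall x, exists y, F (pair y x) = 0) ->
  exists G, compA A G /\ forall x, F (pair (G x) x) = 0 /\ forall z, z < G x -> F (pair z x) <> 0.
Proof. intros [c Hc] Hex.
  set (G := fun x => bmin (fun y => F (pair y x) =? 0) (S (proj1_sig (constructive_indefinite_description _ (Hex x))))).
  assert (HG : forall x, F (pair (G x) x) = 0 /\ forall z, z < G x -> F (pair z x) <> 0).
  { intro x. unfold G. destruct (constructive_indefinite_description _ (Hex x)) as [y Hy]. simpl.
    destruct (bmin_spec (fun y => F (pair y x) =? 0) (S y)) as [B1 [B2 B3]].
    assert (bmin (fun y => F (pair y x) =? 0) (S y) <= y).
    { destruct (Nat.le_gt_cases (bmin (fun y => F (pair y x) =? 0) (S y)) y); auto.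
      specialize (B3 y ltac:(lia)). simpl in B3. rewrite Hy in B3. discriminate. }
    split. + apply Nat.eqb_eq. apply B2. lia.
    + intros z Hz. apply Nat.eqb_neq. apply B3. auto. }
  exists G. split; auto. exists (cMin c). intro x. destruct (HG x) as [H1 H2].
  constructor. rewrite <- H1. auto. intros z Hz. exists (F (pair z x)). split; auto. Qed.

Lemma c_chi A : compA A (chi A).
Proof. eapply compA_ext; [|apply c_oracle]. intro x. unfold chi. destruct (excluded_middle_informative (A x)); auto. Qed.

Lemma MLr_code F n j : j <= n -> MLr F n j = code_list (map F (seq (n - j) j)).
Proof. induction j; intro Hj; simpl; auto. rewrite IHj by lia. unfold consn. simpl.
  replace (S (n - S j)) with (n - j) by lia. reflexivity. Qed.
Lemma ML_code F n : ML F n = code_list (map F (seq 0 n)).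
Proof. unfold ML. rewrite MLr_code by lia. rewrite Nat.sub_diag. auto. Qed.

Lemma sorted_map (E : nat -> nat) : (forall j, E j < E (S j)) -> forall m a, Sorted lt (map E (seq a m)).
Proof. intros HE m. induction m; intro a; simpl; constructor; auto.
  destruct m; simpl; constructor. apply HE. Qed.

Theorem lemma3p2 (n : nat) (hn : 1 <= n) :
  exists f : coloring_seq,
    computable_coloring_seq n f /\
    forall H : nat -> natset,
      (forall i, infinite_set (H i) /\ homogeneous n (f i) (H i)) ->
      Treducible (iterated_jump n) (seq_join H).
Proof.
  exists (fun i s => g n i (code_list s) =? 1). split.
  - destruct (c_g empty_set n) as [c Hc]. exists c. intros i s _.
    specialize (Hc (pair i (code_list s))). simp.
    destruct (g_01 n i (code_list s)) as [E|E]; rewrite E in *; exact Hc.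
  - intros H HH. set (J := seq_join H).
    set (F := fun w => if (P2 (P2 w) <=? P1 w) && (chi J (pair (P1 (P2 w)) (P1 w)) =? 1) then 0 else 1).
    assert (cF : compA J F). { unfold F. assert (compA J (chi J)) by apply c_chi. ct3. }
    assert (HF : forall x, exists y, F (pair y x) = 0).
    { intro x. destruct (proj1 (HH (P1 x)) (P2 x)) as [y [Hy1 Hy2]]. exists y. unfold F. simp.
      replace (P2 x <=? y) with true by (symmetry; apply Nat.leb_le; auto). simpl.
      unfold chi. destruct (excluded_middle_informative (J (pair (P1 x) y))) as [_|Hn]; auto.
      exfalso. apply Hn. exists (P1 x), y. auto. }
    destruct (c_min J F cF HF) as [G [cG HG]].
    assert (HG1 : forall i m, m <= G (pair i m) /\ H i (G (pair i m))).
    { intros i m. destruct (HG (pair i m)) as [H1 _]. unfold F in H1. simp.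
      destruct (m <=? G (pair i m)) eqn:E1; simpl in H1; [|discriminate].
      destruct (chi J (pair i (G (pair i m))) =? 1) eqn:E2; [|discriminate].
      apply Nat.leb_le in E1. split; auto. apply Nat.eqb_eq in E2. unfold chi in E2.
      destruct (excluded_middle_informative (J (pair i (G (pair i m))))) as [Hj|]; [|discriminate].
      destruct Hj as [i' [x' [Ep Hx]]]. apply pair_inj in Ep. destruct Ep; subst; auto. }
    set (E := fun i j => PR (fun i => G (pair i 0)) (fun w => G (pair (P2 (P2 w)) (S (P1 (P2 w))))) j i).
    assert (E0 : forall i, E i 0 = G (pair i 0)) by reflexivity.
    assert (ES : forall i j, E i (S j) = G (pair i (S (E i j)))).
    { intros. unfold E. simpl. simp. reflexivity. }
    set (Rf := fun i => g n i (ML (fun j => E i j) n)).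
    assert (cR : compA J Rf). { unfold Rf, E. assert (compA J (fun w => g n (P1 w) (P2 w))) by apply c_g. ct3. }
    assert (HR : forall i, Rf i = chi (iterated_jump n) i).
    { intro i. destruct (HH i) as [Hinf [b Hb]].
      assert (Hc : forall l, is_nsubset n l -> Forall (H i) l -> g n i (code_list l) = bool2nat b).
      { intros l Hl Hf. specialize (Hb l Hl Hf). destruct (g_01 n i (code_list l)) as [E1|E1];
        rewrite E1 in *; subst b; reflexivity. }
      rewrite (homog_Lim n _ _ (g_Lim n i) (H i) (bool2nat b) Hinf Hc).
      unfold Rf. rewrite ML_code. apply Hc.
      - split. rewrite length_map, length_seq. auto.
        apply sorted_map. intro j. rewrite ES. pose proof (proj1 (HG1 i (S (E i j)))). lia.
      - apply Forall_forall. intros x Hx. apply in_map_iff in Hx. destruct Hx as [j [Hj _]]. subst.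
        destruct j. rewrite E0. apply HG1. rewrite ES. apply HG1. }
    destruct cR as [c Hc]. exists c. intro x. specialize (Hc x). rewrite HR in Hc. unfold chi in Hc.
    destruct (excluded_middle_informative (iterated_jump n x)); split; intro; try contradiction; exact Hc.
Qed.
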